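(* Let $d\ge1$ and let $M\subseteq\mathbb{R}^d$ be a multirectangle. Every element of order $2$ in $\operatorname{Rec}_d(M)$ is a product of rectangle transpositions with pairwise disjoint supports.
   Context: A rectangle in $\mathbb{R}^d$ is a set $\prod_{i=1}^d[a_i,b_i)$ with $a_i<b_i$ real numbers. A multirectangle is a finite union of rectangles. For a multirectangle $M\subseteq\mathbb{R}^d$, $\operatorname{Rec}_d(M)$ denotes the group, under composition, of all bijections $f:M\to M$ for which there exists a finite partition of $M$ into rectangles such that the restriction of $f$ to each piece is a translation. A rectangle transposition is, for two disjoint rectangles $P,Q\subseteq M$ with $Q=P+v$, the element $\tau_{P,Q}$ that is translation by $v$ on $P$, by $-v$ on $Q$, and the identity elsewhere; its support is $P\cup Q$. *)

(* Defs.v *)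
From Stdlib Require Import Reals.
From mathcomp Require Import all_boot.

Set Implicit Arguments.
Unset Strict Implicit.
Unset Printing Implicit Defensive.

Local Open Scope R_scope.

Definition point (d : nat) := 'I_d -> R.

Definition pset (d : nat) := point d -> Prop.

Definition vadd (d : nat) (x v : point d) : point d := fun i => x i + v i.
Definition vsub (d : nat) (x v : point d) : point d := fun i => x i - v i.

(* A rectangle is given by its corner vectors a, b : prod_i [a_i, b_i). *)
Definition box (d : nat) := (point d * point d)%type.

Definition box0 (d : nat) : box d := (fun _ => 0, fun _ => 0).

Definition box_ok (d : nat) (r : box d) : Prop := forall i, r.1 i < r.2 i.

Definition box_set (d : nat) (r : box d) : pset d :=
  fun x => forall i, r.1 i <= x i /\ x i < r.2 i.

Definition is_rectangle (d : nat) (P : pset d) : Prop :=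
  exists r : box d, box_ok r /\ forall x, P x <-> box_set r x.

Definition is_multirectangle (d : nat) (M : pset d) : Prop :=
  exists l : seq (box d), (forall r, List.In r l -> box_ok r) /\
    forall x, M x <-> exists2 r, List.In r l & box_set r x.

Definition rect_partition (d : nat) (M : pset d) (l : seq (box d)) : Prop :=
  (forall r, List.In r l -> box_ok r) /\
  (forall j k, (j < size l)%N -> (k < size l)%N -> j <> k ->
     forall x, ~ (box_set (nth (box0 d) l j) x /\ box_set (nth (box0 d) l k) x)) /\
  (forall x, M x <-> exists2 r, List.In r l & box_set r x).

(* f (restricted to M) is an element of Rec_d(M): a bijection M -> M which is
   a translation on each piece of some finite partition of M into rectangles.
   Values of f outside M are irrelevant. *)
Definition in_Rec (d : nat) (M : pset d) (f : point d -> point d) : Prop :=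
  (forall x, M x -> M (f x)) /\
  (forall x y, M x -> M y -> f x = f y -> x = y) /\
  (forall y, M y -> exists2 x, M x & f x = y) /\
  exists l : seq (box d), rect_partition M l /\
    forall r, List.In r l -> exists v : point d,
      forall x, box_set r x -> f x = vadd x v.

(* f has order exactly 2 in Rec_d(M) (equality of elements = equality on M). *)
Definition order_two (d : nat) (M : pset d) (f : point d -> point d) : Prop :=
  (forall x, M x -> f (f x) = x) /\ (exists x, M x /\ f x <> x).

Definition is_rect_transposition (d : nat) (M : pset d)
    (P Q : box d) (v : point d) (g : point d -> point d) : Prop :=
  box_ok P /\ box_ok Q /\
  (forall x, box_set P x -> M x) /\ (forall x, box_set Q x -> M x) /\
  (forall x, ~ (box_set P x /\ box_set Q x)) /\
  (forall y, box_set Q y <-> box_set P (vsub y v)) /\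
  (forall x, box_set P x -> g x = vadd x v) /\
  (forall x, box_set Q x -> g x = vsub x v) /\
  (forall x, ~ box_set P x -> ~ box_set Q x -> g x = x).

Definition tr_support (d : nat) (t : box d * box d) : pset d :=
  fun x => box_set t.1 x \/ box_set t.2 x.

Definition comp_list (d : nat) (gs : seq (point d -> point d)) : point d -> point d :=
  foldr (fun g h => fun x => g (h x)) (fun x => x) gs.

Definition tr0 (d : nat) : box d * box d * point d * (point d -> point d) :=
  (box0 d, box0 d, fun _ => 0, fun x => x).

(* Main.v *)
Require Import Defs.
From Stdlib Require Import Reals Lra Lia ClassicalEpsilon FunctionalExtensionality.
From mathcomp Require Import all_boot zify.

Set Implicit Arguments.
Unset Strict Implicit.
Unset Printing Implicit Defensive.

Local Open Scope R_scope.

Definition binter d (r s : box d) : box d :=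
  (fun i => Rmax (r.1 i) (s.1 i), fun i => Rmin (r.2 i) (s.2 i)).
Definition bshift d (r : box d) (v : point d) : box d :=
  (fun i => r.1 i - v i, fun i => r.2 i - v i).

Lemma binter_spec d (r s : box d) x :
  box_set (binter r s) x <-> box_set r x /\ box_set s x.
Proof.
unfold box_set, binter; simpl; split.
- intros H; split; intro i; specialize (H i); unfold Rmax, Rmin in H;
  destruct Rle_dec; destruct Rle_dec; lra.
- intros [H1 H2] i; specialize (H1 i); specialize (H2 i); unfold Rmax, Rmin;
  destruct Rle_dec; destruct Rle_dec; lra.
Qed.

Lemma bshift_spec d (r : box d) v x :
  box_set (bshift r v) x <-> box_set r (vadd x v).
Proof.
unfold box_set, bshift, vadd; simpl; split; intros H i; specialize (H i); lra.
Qed.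

Lemma box_ok_of d (r : box d) x : box_set r x -> box_ok r.
Proof. intros H i; specialize (H i); lra. Qed.

Lemma box_ok_pt d (r : box d) : box_ok r -> box_set r r.1.
Proof. intros H i; specialize (H i); lra. Qed.

Lemma nth_In_seq T (x0 : T) (l : seq T) j : (j < size l)%N -> List.In (nth x0 l j) l.
Proof.
elim: l j => [|a l IH] [|j] //= H; [left; reflexivity | right; apply IH; exact H].
Qed.

Lemma In_nth_seq T (x0 : T) (l : seq T) r : List.In r l ->
  exists j, (j < size l)%N /\ nth x0 l j = r.
Proof.
elim: l => [|a l IH] //= [->|H]; first by exists 0%N.
have [j [Hj E]] := IH H. by exists j.+1.
Qed.

Lemma vadd_vsub d (y v : point d) : vadd (vsub y v) v = y.
Proof. apply functional_extensionality => i; unfold vadd, vsub; lra. Qed.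
Lemma vsub_vadd d (y v : point d) : vsub (vadd y v) v = y.
Proof. apply functional_extensionality => i; unfold vadd, vsub; lra. Qed.

Lemma rt_fix d M P Q v g x : @is_rect_transposition d M P Q v g ->
  ~ tr_support (P, Q) x -> g x = x.
Proof.
move=> [_ [_ [_ [_ [_ [_ [_ [_ H]]]]]]]] Hs; apply H => h; apply Hs; [left|right]; exact h.
Qed.

Lemma rt_stay d M (PQ : box d * box d) v g x : @is_rect_transposition d M PQ.1 PQ.2 v g ->
  tr_support PQ x -> tr_support PQ (g x).
Proof.
case: PQ => P Q /=.
move=> [_ [_ [_ [_ [Hd [HQ [HgP [HgQ _]]]]]]]] [h|h]; rewrite /tr_support /=.
- right; rewrite HgP //; apply/HQ; rewrite vsub_vadd //.
- left; rewrite HgQ //; apply/HQ; exact h.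
Qed.

Definition trs d := seq (box d * box d * point d * (point d -> point d)).

Lemma comp_lemma d M (ts : trs d) :
  (forall i, (i < size ts)%N -> let t := nth (tr0 d) ts i in
      is_rect_transposition M t.1.1.1 t.1.1.2 t.1.2 t.2) ->
  (forall j k, (j < size ts)%N -> (k < size ts)%N -> j <> k ->
       forall x, ~ (tr_support (nth (tr0 d) ts j).1.1 x /\
                    tr_support (nth (tr0 d) ts k).1.1 x)) ->
  (forall x, (forall i, (i < size ts)%N -> ~ tr_support (nth (tr0 d) ts i).1.1 x) ->
     comp_list (map (fun t => t.2) ts) x = x) /\
  (forall i x, (i < size ts)%N -> tr_support (nth (tr0 d) ts i).1.1 x ->
     comp_list (map (fun t => t.2) ts) x = (nth (tr0 d) ts i).2 x).
Proof.
elim: ts => [|t ts IH] H1 H2; first by split => // i x.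
have H1' : forall i, (i < size ts)%N -> let t := nth (tr0 d) ts i in
      is_rect_transposition M t.1.1.1 t.1.1.2 t.1.2 t.2.
  by move=> i Hi; apply: (H1 i.+1).
have H2' : forall j k, (j < size ts)%N -> (k < size ts)%N -> j <> k ->
       forall x, ~ (tr_support (nth (tr0 d) ts j).1.1 x /\
                    tr_support (nth (tr0 d) ts k).1.1 x).
  by move=> j k Hj Hk Hjk; apply: (H2 j.+1 k.+1) => // [[]].
have [IHa IHb] := IH H1' H2'.
have Ht := H1 0%N isT. simpl in Ht.
destruct t as [[[P Q] v] g]; simpl in *.
split.
- move=> x Hx; rewrite IHa; last by move=> i Hi; apply: (Hx i.+1).
  apply: (rt_fix Ht); exact: (Hx 0%N).
- move=> [|i] x /= Hi Hs.
  + rewrite IHa //. move=> k Hk Hk'; apply: (H2 0%N k.+1 isT Hk) => //; split; [exact Hs | exact Hk'].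
  + rewrite (IHb i x Hi Hs). apply: (rt_fix Ht) => Hs'.
    apply: (H2 0%N i.+1) => //; split; first exact Hs'.
    exact: (rt_stay (H1' i Hi) Hs).
Qed.

Definition Vof d (f : point d -> point d) (l : seq (box d)) (j : nat) : point d :=
  match excluded_middle_informative
     (exists v, forall x, box_set (nth (box0 d) l j) x -> f x = vadd x v) with
  | left h => proj1_sig (constructive_indefinite_description _ h)
  | right _ => fun _ => 0
  end.

Lemma Vof_spec d (f : point d -> point d) l j :
  (exists v, forall x, box_set (nth (box0 d) l j) x -> f x = vadd x v) ->
  forall x, box_set (nth (box0 d) l j) x -> f x = vadd x (Vof f l j).
Proof.
move=> h; rewrite /Vof; case: excluded_middle_informative => // h'.
by case: constructive_indefinite_description.
Qed.

Definition piece d (f : point d -> point d) l j k : box d :=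
  binter (nth (box0 d) l j) (bshift (nth (box0 d) l k) (Vof f l j)).

Lemma piece_spec d (f : point d -> point d) l j k y :
  box_set (piece f l j k) y <->
  box_set (nth (box0 d) l j) y /\ box_set (nth (box0 d) l k) (vadd y (Vof f l j)).
Proof. rewrite /piece binter_spec bshift_spec; tauto. Qed.

Definition gfun d (P Q : box d) (v : point d) (x : point d) : point d :=
  if excluded_middle_informative (box_set P x) then vadd x v
  else if excluded_middle_informative (box_set Q x) then vsub x v else x.

Lemma gfun_P d (P Q : box d) v x : box_set P x -> gfun P Q v x = vadd x v.
Proof. rewrite /gfun => H; by destruct (excluded_middle_informative (box_set P x)). Qed.
Lemma gfun_Q d (P Q : box d) v x : ~ box_set P x -> box_set Q x -> gfun P Q v x = vsub x v.
Proof. rewrite /gfun => H H'; destruct (excluded_middle_informative (box_set P x)) => //;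
  by destruct (excluded_middle_informative (box_set Q x)). Qed.
Lemma gfun_O d (P Q : box d) v x : ~ box_set P x -> ~ box_set Q x -> gfun P Q v x = x.
Proof. rewrite /gfun => H H'; destruct (excluded_middle_informative (box_set P x)) => //;
  by destruct (excluded_middle_informative (box_set Q x)). Qed.

Definition asb (P : Prop) : bool := if excluded_middle_informative P then true else false.
Lemma asbP P : asb P = true <-> P.
Proof. rewrite /asb; case: excluded_middle_informative => //. Qed.

Definition mk d (f : point d -> point d) l (p : nat * nat) :=
  (piece f l p.1 p.2, piece f l p.2 p.1, Vof f l p.1,
   gfun (piece f l p.1 p.2) (piece f l p.2 p.1) (Vof f l p.1)).

Definition pairs d (f : point d -> point d) (l : seq (box d)) :=
  [seq p <- [seq (j, k) | j <- iota 0 (size l), k <- iota 0 (size l)] |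
     (p.1 < p.2)%N && asb (box_ok (piece f l p.1 p.2))].

Lemma pairs_uniq d (f : point d -> point d) l : uniq (pairs f l).
Proof.
apply: filter_uniq; apply: allpairs_uniq; try exact: iota_uniq.
by move=> [a b] [c e] _ _ /= [-> ->].
Qed.

Lemma pairs_mem d (f : point d -> point d) l p : p \in pairs f l ->
  [/\ (p.1 < p.2)%N, (p.2 < size l)%N & box_ok (piece f l p.1 p.2)].
Proof.
rewrite mem_filter => /andP [/andP [H1 /asbP H2] /allpairsP [[a b] [Ha Hb E]]].
subst p. move: Hb; rewrite mem_iota /= => Hb. split => //.
Qed.

Lemma pairs_in d (f : point d -> point d) l j k :
  (j < k)%N -> (k < size l)%N -> box_ok (piece f l j k) -> (j, k) \in pairs f l.
Proof.
move=> H1 H2 H3; rewrite mem_filter /= H1 /=.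
have -> : asb (box_ok (piece f l j k)) = true by apply/asbP.
apply/allpairsP; exists (j, k); rewrite !mem_iota /=; split => //.
  by apply: ltn_trans H2.
Qed.

Theorem mainTheorem5 (d : nat) (M : pset d) (f : point d -> point d) :
  (1 <= d)%N ->
  is_multirectangle M ->
  in_Rec M f ->
  order_two M f ->
  exists (ts : seq (box d * box d * point d * (point d -> point d))),
    (forall t, List.In t ts -> is_rect_transposition M t.1.1.1 t.1.1.2 t.1.2 t.2) /\
    (forall j k, (j < size ts)%N -> (k < size ts)%N -> j <> k ->
       forall x, ~ (tr_support (nth (tr0 d) ts j).1.1 x /\
                    tr_support (nth (tr0 d) ts k).1.1 x)) /\
    (forall x, M x -> f x = comp_list (map (fun t => t.2) ts) x).
Proof.
move=> _ _ [HfM [_ [_ [l [[Hok [Hdisj Hcov]] Htr]]]]] [Hff _].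
have HV : forall j, (j < size l)%N -> forall x, box_set (nth (box0 d) l j) x ->
    f x = vadd x (Vof f l j).
  move=> j Hj; apply: Vof_spec; apply: Htr; exact: nth_In_seq.
have RM : forall j x, (j < size l)%N -> box_set (nth (box0 d) l j) x -> M x.
  move=> j x Hj Hx; apply/Hcov; exists (nth (box0 d) l j) => //; exact: nth_In_seq.
have Runiq : forall j j' x, (j < size l)%N -> (j' < size l)%N ->
    box_set (nth (box0 d) l j) x -> box_set (nth (box0 d) l j') x -> j = j'.
  move=> j j' x Hj Hj' H H'; destruct (Nat.eq_dec j j') as [e|ne] => //.
  exfalso; exact: (Hdisj j j' Hj Hj' ne x (conj H H')).
have Rcov : forall x, M x -> exists j, (j < size l)%N /\ box_set (nth (box0 d) l j) x.
  move=> x /Hcov [r Hr Hx]; have [j [Hj E]] := In_nth_seq (box0 d) Hr.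
  exists j; split => //; by rewrite E.
have Vopp : forall j k x, (j < size l)%N -> (k < size l)%N ->
    box_set (piece f l j k) x -> forall i, Vof f l k i = - Vof f l j i.
  move=> j k x Hj Hk /piece_spec [H1 H2] i.
  have E1 := HV j Hj x H1.
  have E2 := HV k Hk _ H2.
  have E3 := Hff x (RM j x Hj H1). rewrite E1 E2 in E3.
  have := f_equal (fun p => p i) E3. rewrite /vadd /=. lra.
have piece_uniq : forall a b a' b' x, (a < size l)%N -> (b < size l)%N ->
    (a' < size l)%N -> (b' < size l)%N ->
    box_set (piece f l a b) x -> box_set (piece f l a' b') x -> a = a' /\ b = b'.
  move=> a b a' b' x Ha Hb Ha' Hb' /piece_spec [H1 H2] /piece_spec [H1' H2'].
  have e := Runiq _ _ _ Ha Ha' H1 H1'. subst a'. split => //.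
  exact: (Runiq _ _ _ Hb Hb' H2 H2').
have piece_f : forall a b x, (a < size l)%N -> box_set (piece f l a b) x ->
    f x = vadd x (Vof f l a) /\ box_set (nth (box0 d) l b) (f x).
  move=> a b x Ha /piece_spec [H1 H2]. have E := HV a Ha x H1.
  split => //. by rewrite E.
have piece_sym : forall a b x, (a < size l)%N -> (b < size l)%N ->
    box_set (piece f l a b) x -> box_set (piece f l b a) (f x).
  move=> a b x Ha Hb Hp. have [E H2] := piece_f a b x Ha Hp.
  apply/piece_spec; split => //. rewrite -(HV b Hb _ H2) Hff //.
  - by move/piece_spec: Hp => [H1 _].
  - move/piece_spec: Hp => [H1 _]; exact: (RM a x Ha H1).
pose ts := map (mk f l) (pairs f l).
have Hts : forall i, (i < size ts)%N -> nth (tr0 d) ts i = mk f l (nth (0, 0)%N (pairs f l) i).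
  move=> i Hi; rewrite /ts (nth_map (0, 0)%N) //. by rewrite size_map in Hi.
have Hrt : forall p, p \in pairs f l -> let t := mk f l p in
    is_rect_transposition M t.1.1.1 t.1.1.2 t.1.2 t.2.
  move=> [j k] /pairs_mem [/= Hjk Hk Hokp].
  have Hj : (j < size l)%N by apply: ltn_trans Hjk Hk.
  have Hx0 := box_ok_pt Hokp.
  have Vo := Vopp j k (piece f l j k).1 Hj Hk Hx0.
  have Vk : Vof f l k = vsub (fun _ => 0) (Vof f l j).
    apply functional_extensionality => i; have := Vo i; rewrite /vsub; lra.
  rewrite /mk /=. unfold is_rect_transposition.
  split; first done.
  split; first exact: (box_ok_of (piece_sym j k (piece f l j k).1 Hj Hk Hx0)).
  split; first by move=> x /piece_spec [H _]; exact: (RM j x Hj H).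
  split; first by move=> x /piece_spec [H _]; exact: (RM k x Hk H).
  split.
    move=> x [H1 H2]. have [e _] := piece_uniq j k k j x Hj Hk Hk Hj H1 H2.
    by rewrite e ltnn in Hjk.
  split.
    move=> y; rewrite !piece_spec vadd_vsub.
    have -> : vadd y (Vof f l k) = vsub y (Vof f l j).
      apply functional_extensionality => i; have := Vo i; rewrite /vadd /vsub; lra.
    tauto.
  split; first by move=> x Hx; rewrite gfun_P.
  split.
    move=> x Hx; rewrite gfun_Q // => H.
      have [e _] := piece_uniq j k k j x Hj Hk Hk Hj H Hx.
      by rewrite e ltnn in Hjk.
  move=> x H1 H2; by rewrite gfun_O.
have Hsz : size ts = size (pairs f l) by rewrite size_map.
have H1 : forall i, (i < size ts)%N -> let t := nth (tr0 d) ts i in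
      is_rect_transposition M t.1.1.1 t.1.1.2 t.1.2 t.2.
  move=> i Hi; rewrite Hts //; apply: Hrt; apply: mem_nth; by rewrite -Hsz.
have H2 : forall j k, (j < size ts)%N -> (k < size ts)%N -> j <> k ->
       forall x, ~ (tr_support (nth (tr0 d) ts j).1.1 x /\
                    tr_support (nth (tr0 d) ts k).1.1 x).
  move=> j k Hj Hk Hjk x; rewrite (Hts j Hj) (Hts k Hk).
  have Hj' : (j < size (pairs f l))%N by rewrite -Hsz.
  have Hk' : (k < size (pairs f l))%N by rewrite -Hsz.
  have Hne : nth (0, 0)%N (pairs f l) j <> nth (0, 0)%N (pairs f l) k.
    move=> E; apply: Hjk; apply/eqP.
    by rewrite -(nth_uniq (0, 0)%N Hj' Hk' (pairs_uniq f l)) E.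
  move: Hne (pairs_mem (mem_nth (0, 0)%N Hj')) (pairs_mem (mem_nth (0, 0)%N Hk')).
  case: (nth _ _ j) => a b; case: (nth _ _ k) => a' b' /= Hne [Hab Hb _] [Hab' Hb' _].
  have Ha : (a < size l)%N by apply: ltn_trans Hab Hb.
  have Ha' : (a' < size l)%N by apply: ltn_trans Hab' Hb'.
  rewrite /mk /tr_support /= => [[[H|H] [H'|H']]].
  - have [e1 e2] := piece_uniq _ _ _ _ x Ha Hb Ha' Hb' H H'. by subst.
  - have [e1 e2] := piece_uniq _ _ _ _ x Ha Hb Hb' Ha' H H'. subst. lia.
  - have [e1 e2] := piece_uniq _ _ _ _ x Hb Ha Ha' Hb' H H'. subst. lia.
  - have [e1 e2] := piece_uniq _ _ _ _ x Hb Ha Hb' Ha' H H'. by subst.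
have [Ca Cb] := comp_lemma H1 H2.
exists ts; split.
  move=> t /(In_nth_seq (tr0 d)) [i [Hi <-]]; exact: H1.
split; first exact: H2.
move=> x Mx.
destruct (classic (exists i, (i < size ts)%N /\ tr_support (nth (tr0 d) ts i).1.1 x))
  as [[i [Hi Hs]]|Hno].
- rewrite (Cb i x Hi Hs). rewrite Hts // in Hs *.
  have Hi' : (i < size (pairs f l))%N by rewrite -Hsz.
  move: Hs (pairs_mem (mem_nth (0, 0)%N Hi')).
  case: (nth _ _ i) => a b /= Hs [Hab Hb _].
  have Ha : (a < size l)%N by apply: ltn_trans Hab Hb.
  rewrite /mk /= in Hs *. case: Hs => /= Hs.
  + rewrite gfun_P //. by have [-> _] := piece_f a b x Ha Hs.
  + rewrite gfun_Q // => [|H]; last first.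
      have [e _] := piece_uniq a b b a x Ha Hb Hb Ha H Hs. subst; by rewrite ltnn in Hab.
    have [-> _] := piece_f b a x Hb Hs.
    apply functional_extensionality => i0; rewrite /vadd /vsub.
    rewrite (Vopp b a x Hb Ha Hs i0); lra.
- rewrite Ca; last by move=> i Hi Hs; apply Hno; exists i; split.
  have [a [Ha Hxa]] := Rcov x Mx. have [b [Hb Hfb]] := Rcov (f x) (HfM x Mx).
  have Hp : box_set (piece f l a b) x.
    apply/piece_spec; split => //; by rewrite -(HV a Ha x Hxa).
  case: (ltngtP a b) => Hab.
  + exfalso; have Hin := pairs_in Hab Hb (box_ok_of Hp).
    apply Hno; exists (index (a, b) (pairs f l)).
    have Hix : (index (a, b) (pairs f l) < size ts)%N by rewrite Hsz index_mem.
    split => //. rewrite Hts // nth_index //. left; exact Hp.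
  + exfalso; have Hq := piece_sym a b x Ha Hb Hp.
    have Hin := pairs_in Hab Ha (box_ok_of Hq).
    apply Hno; exists (index (b, a) (pairs f l)).
    have Hix : (index (b, a) (pairs f l) < size ts)%N by rewrite Hsz index_mem.
    split => //. rewrite Hts // nth_index //. right; exact Hp.
  + subst b. have [E _] := piece_f a a x Ha Hp. rewrite E.
    apply functional_extensionality => i0; rewrite /vadd.
    have := Vopp a a x Ha Ha Hp i0. lra.
Qed.
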